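(* Consider the uncertain system \[ \dot x = f(x) + g(x)u + \varphi(x,u)\theta,\qquad \varphi(x,u)=[F(x)\;\; G(x)\,\mathrm{diag}(u)]\in\mathbb{R}^{n\times(p+m)}, \] with input $u\in\mathcal{U}\subseteq\mathbb{R}^m$, known locally Lipschitz $f,g$, known $F:\mathbb{R}^n\to\mathbb{R}^{n\times p}$, $G:\mathbb{R}^n\to\mathbb{R}^{n\times m}$, and unknown $\theta\in\mathbb{R}^{p+m}$ lying in a known hyperrectangle $\Theta=[\underline{\theta}_1,\overline{\theta}_1]\times\cdots\times[\underline{\theta}_{p+m},\overline{\theta}_{p+m}]$. Let $\{\Xi_k\}_{k\ge0}$ be the sequence of parameter sets generated by the integral set-membership identification scheme described below. Let $V:\mathbb{R}^n\to\mathbb{R}_{\ge0}$ be continuously differentiable and positive definite, $\mathcal{D}\subseteq\mathbb{R}^n$, and suppose there is a class $\mathcal{K}$ function $\gamma$ such that for all $x\in\mathcal{D}$ \[ \inf_{u\in\mathcal{U}}\sup_{\theta\in\Theta}\dot V(x,u,\theta)\le-\gamma(V(x)),\qquad \dot V(x,u,\theta)=L_fV(x)+L_gV(x)u+L_\varphi V(x,u)\theta. \] Then $\inf_{u\in\mathcal{U}}\sup_{\theta\in\Xi_k}\dot V(x,u,\theta)\le-\gamma(V(x))$ for all $x\in\mathcal{D}$ and all $k\in\mathbb{Z}_{\ge0}$.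
   Context: $L_fV=\nabla V\, f$, $L_gV=\nabla V\, g$, $L_\varphi V(x,u)=\nabla V(x)\varphi(x,u)$. Class $\mathcal{K}$: continuous strictly increasing $\gamma:[0,\infty)\to[0,\infty)$ with $\gamma(0)=0$. The identification scheme: let $x(\cdot)$ be a solution under an input signal $u(\cdot)$; fix $\Delta t>0$ and for $t\ge\Delta t$ let $\Delta x(t)=\int_{t-\Delta t}^t\dot x\,ds$, $\mathcal{F}(t)=\int_{t-\Delta t}^t f(x(s))ds$, $\mathcal{G}(t)=\int_{t-\Delta t}^t g(x(s))u(s)ds$, $\mathcal{S}(t)=\int_{t-\Delta t}^t\varphi(x(s),u(s))ds$. Let $\{t_k\}$ be strictly increasing with $t_0=0$; at time $t$ a history stack $\{\Delta x_j(t),\mathcal{F}_j(t),\mathcal{G}_j(t),\mathcal{S}_j(t)\}_{j\in\mathcal{M}(t)}$ consists of values of $(\Delta x,\mathcal{F},\mathcal{G},\mathcal{S})$ recorded at times in $[\Delta t,t]$. With $\varepsilon>0$, $\Xi_0=\Theta$, and for $k\ge1$, $\Xi_k=\prod_i[\underline\theta_i^k,\overline\theta_i^k]$ where $\underline\theta_i^k$ (resp. $\overline\theta_i^k$) is the minimum (resp. maximum) of $\theta_i$ over $\theta\in\Xi_{k-1}$ satisfying $-\varepsilon\mathbf{1}_n\le\Delta x_j(t_k)-\mathcal{F}_j(t_k)-\mathcal{G}_j(t_k)-\mathcal{S}_j(t_k)\theta\le\varepsilon\mathbf{1}_n$ for all $j\in\mathcal{M}(t_k)$ ($\mathbf{1}_n$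 the vector of ones, inequalities componentwise). *)

(* Defs.v *)
From HB Require Import structures.
From mathcomp Require Import all_boot all_order all_algebra.
From mathcomp Require Import all_classical all_reals all_analysis.
Set Implicit Arguments.
Unset Strict Implicit.
Unset Printing Implicit Defensive.
Import Order.TTheory GRing.Theory Num.Theory.
Import numFieldNormedType.Exports.
Local Open Scope classical_set_scope.
Local Open Scope ring_scope.

Section Defs.
Variable R : realType.

Definition wint (dt t : R) (h : R -> R) : R :=
  \int[lebesgue_measure]_(s in `[t - dt, t]) h s.

Definition wintegrable (dt t : R) (h : R -> R) : Prop :=
  lebesgue_measure.-integrable `[t - dt, t] (fun s => (h s)%:E).

Definition loc_lipschitz (a b c d : nat) (h : 'M[R]_(a, b) -> 'M[R]_(c, d)) :=
  forall x0 : 'M[R]_(a, b), exists r : R, exists L : R, 0 < r /\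
    forall y z, `|y - x0| < r -> `|z - x0| < r -> `|h y - h z| <= L * `|y - z|.

Definition phi (n p m : nat) (F : 'cV[R]_n -> 'M[R]_(n, p))
  (G : 'cV[R]_n -> 'M[R]_(n, m)) (x : 'cV[R]_n) (u : 'cV[R]_m) : 'M[R]_(n, p + m) :=
  row_mx (F x) (G x *m diag_mx u^T).

Definition box (q : nat) (lo hi : 'cV[R]_q) : set 'cV[R]_q :=
  [set th | forall i : 'I_q, lo i 0 <= th i 0 <= hi i 0].

(* one history-stack entry (Dx_j, F_j, G_j, S_j) *)
Definition entry (n q : nat) := ('cV[R]_n * 'cV[R]_n * 'cV[R]_n * 'M[R]_(n, q))%type.

Definition record (n p m : nat) (f : 'cV[R]_n -> 'cV[R]_n)
  (g : 'cV[R]_n -> 'M[R]_(n, m)) (F : 'cV[R]_n -> 'M[R]_(n, p))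
  (G : 'cV[R]_n -> 'M[R]_(n, m)) (x : R -> 'cV[R]_n) (xd : R -> 'cV[R]_n)
  (u : R -> 'cV[R]_m) (dt tau : R) : entry n (p + m) :=
  (\col_i wint dt tau (fun s => xd s i 0),
   \col_i wint dt tau (fun s => f (x s) i 0),
   \col_i wint dt tau (fun s => (g (x s) *m u s) i 0),
   \matrix_(i, j) wint dt tau (fun s => phi F G (x s) (u s) i j)).

Definition consistent (n q : nat) (A : set 'cV[R]_q) (stack : seq (entry n q))
  (eps : R) : set 'cV[R]_q :=
  [set th | A th /\ forall e, e \in stack -> forall i : 'I_n,
     - eps <= (e.1.1.1 - e.1.1.2 - e.1.2 - e.2 *m th) i 0 <= eps].

Fixpoint Xi_bounds (n q : nat) (lo0 hi0 : 'cV[R]_q) (tk : nat -> R)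
  (stack : R -> seq (entry n q)) (eps : R) (k : nat) : 'cV[R]_q * 'cV[R]_q :=
  match k with
  | 0 => (lo0, hi0)
  | k'.+1 =>
      let b := Xi_bounds lo0 hi0 tk stack eps k' in
      let S := consistent (box b.1 b.2) (stack (tk k)) eps in
      (\col_i inf [set th i 0 | th in S], \col_i sup [set th i 0 | th in S])
  end.

Definition Xi (n q : nat) (lo0 hi0 : 'cV[R]_q) (tk : nat -> R)
  (stack : R -> seq (entry n q)) (eps : R) (k : nat) : set 'cV[R]_q :=
  let b := Xi_bounds lo0 hi0 tk stack eps k in box b.1 b.2.

Definition Vdot (n p m : nat) (gradV : 'cV[R]_n -> 'rV[R]_n)
  (f : 'cV[R]_n -> 'cV[R]_n) (g : 'cV[R]_n -> 'M[R]_(n, m))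
  (F : 'cV[R]_n -> 'M[R]_(n, p)) (G : 'cV[R]_n -> 'M[R]_(n, m))
  (x : 'cV[R]_n) (u : 'cV[R]_m) (th : 'cV[R]_(p + m)) : R :=
  (gradV x *m f x) 0 0 + (gradV x *m g x *m u) 0 0
  + (gradV x *m phi F G x u *m th) 0 0.

Definition infsup (n p m : nat) (gradV : 'cV[R]_n -> 'rV[R]_n)
  (f : 'cV[R]_n -> 'cV[R]_n) (g : 'cV[R]_n -> 'M[R]_(n, m))
  (F : 'cV[R]_n -> 'M[R]_(n, p)) (G : 'cV[R]_n -> 'M[R]_(n, m))
  (U : set 'cV[R]_m) (A : set 'cV[R]_(p + m)) (x : 'cV[R]_n) : \bar R :=
  ereal_inf [set ereal_sup [set (Vdot gradV f g F G x u th)%:E | th in A]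
            | u in U].

Definition classK (gam : R -> R) : Prop :=
  {within `[0, +oo[, continuous gam} /\ gam 0 = 0 /\
  (forall a, 0 <= a -> 0 <= gam a) /\
  (forall a b, 0 <= a -> a < b -> gam a < gam b).

End Defs.

(* Main.v *)
Require Import Defs.
From HB Require Import structures.
From mathcomp Require Import all_boot all_order all_algebra.
From mathcomp Require Import all_classical all_reals all_analysis.
From mathcomp Require Import ring lra.
Import Order.TTheory GRing.Theory Num.Theory.
Import numFieldNormedType.Exports.
Local Open Scope classical_set_scope.
Local Open Scope ring_scope.

Lemma Rint_sum (R : realType) (l0 l1 : R) (I : Type) (r : seq I)
  (h : I -> R -> R) (c : I -> R) :
  (forall i, lebesgue_measure.-integrable `[l0, l1] (EFin \o h i)) ->
  lebesgue_measure.-integrable `[l0, l1] (EFin \o (fun s => \sum_(i <- r) h i s * c i)) /\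
  \int[lebesgue_measure]_(s in `[l0, l1]) (\sum_(i <- r) h i s * c i)
  = \sum_(i <- r) (\int[lebesgue_measure]_(s in `[l0, l1]) h i s) * c i.
Proof.
have mD : measurable (`[l0, l1] : set (measurableTypeR R)).
  exact: measurable_itv.
move=> hi; elim: r => [|a r [IHi IHe]].
  have E : (fun s : R => \sum_(i <- [::]) h i s * c i) = fun=> 0.
    by apply: funext => s; rewrite big_nil.
  rewrite E big_nil; split.
    exact: (integrable0 lebesgue_measure `[l0, l1]).
  by rewrite Rintegral_cst // mul0r.
have E : (fun s : R => \sum_(i <- a :: r) h i s * c i) =
   fun s => h a s * c a + \sum_(i <- r) h i s * c i.
  by apply: funext => s; rewrite big_cons.
have ia : lebesgue_measure.-integrable `[l0, l1] (EFin \o (fun s => h a s * c a)).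
  have := integrableZr mD (c a) (hi a).
  by apply: eq_integrable => // s _ /=.
rewrite E big_cons; split.
  have := integrableD mD ia IHi.
  by apply: eq_integrable => // s _ /=.
by rewrite (RintegralD mD ia IHi) IHe RintegralZr.
Qed.
Lemma record_zero (R : realType) (n p m : nat)
  (f : 'cV[R]_n -> 'cV[R]_n) (g : 'cV[R]_n -> 'M[R]_(n, m))
  (F : 'cV[R]_n -> 'M[R]_(n, p)) (G : 'cV[R]_n -> 'M[R]_(n, m))
  (theta : 'cV[R]_(p + m))
  (x xd : R -> 'cV[R]_n) (u : R -> 'cV[R]_m) (dt tau : R) :
  (forall s : R, 0 <= s ->
     xd s = f (x s) + g (x s) *m u s + phi F G (x s) (u s) *m theta) ->
  (forall i : 'I_n, wintegrable dt tau (fun s => xd s i 0)) /\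
  (forall i : 'I_n, wintegrable dt tau (fun s => f (x s) i 0)) /\
  (forall i : 'I_n, wintegrable dt tau (fun s => (g (x s) *m u s) i 0)) /\
  (forall (i : 'I_n) (j : 'I_(p + m)), wintegrable dt tau (fun s => phi F G (x s) (u s) i j)) ->
  dt <= tau ->
  forall i : 'I_n,
  let e := record f g F G x xd u dt tau in
  (e.1.1.1 - e.1.1.2 - e.1.2 - e.2 *m theta) i 0 = 0.
Proof.
move=> ode [ixd [ixf [ixg ixp]]] dtau i /=.
rewrite !mxE.
under eq_bigr do rewrite mxE.
rewrite /wint.
have mD : measurable (`[tau - dt, tau] : set (measurableTypeR R)).
  exact: measurable_itv.
have -> : \int[lebesgue_measure]_(s in `[tau - dt, tau]) xd s i 0 =
  \int[lebesgue_measure]_(s in `[tau - dt, tau])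
     ((f (x s) i 0 + (g (x s) *m u s) i 0) +
      \sum_j phi F G (x s) (u s) i j * theta j 0).
  apply: eq_Rintegral => s /set_mem /=; rewrite in_itv /= => /andP [h1 h2].
  rewrite ode; last by lra.
  by rewrite !mxE.
have [_ HS] := @Rint_sum R (tau - dt) tau _ (index_enum 'I_(p + m))
  (fun j s => phi F G (x s) (u s) i j) (fun j => theta j 0) (ixp i).
have [IS _] := @Rint_sum R (tau - dt) tau _ (index_enum 'I_(p + m))
  (fun j s => phi F G (x s) (u s) i j) (fun j => theta j 0) (ixp i).
have IFG : lebesgue_measure.-integrable `[tau - dt, tau]
   (EFin \o (fun s => f (x s) i 0 + (g (x s) *m u s) i 0)).
  have := integrableD mD (ixf i) (ixg i).
  by apply: eq_integrable => // s _ /=.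
rewrite (RintegralD mD IFG IS) (RintegralD mD (ixf i) (ixg i)).
rewrite /= in HS; rewrite HS.
ring.
Qed.
Lemma infsup_mono (R : realType) (n p m : nat) (gradV : 'cV[R]_n -> 'rV[R]_n)
  (f : 'cV[R]_n -> 'cV[R]_n) (g : 'cV[R]_n -> 'M[R]_(n, m))
  (F : 'cV[R]_n -> 'M[R]_(n, p)) (G : 'cV[R]_n -> 'M[R]_(n, m))
  (U : set 'cV[R]_m) (A B : set 'cV[R]_(p + m)) (y : 'cV[R]_n) :
  A `<=` B ->
  (infsup gradV f g F G U A y <= infsup gradV f g F G U B y)%E.
Proof.
move=> AB; apply: le_ereal_inf_tmp => _ [v Uv <-].
apply: ge_ereal_inf.
exists (ereal_sup [set (Vdot gradV f g F G y v th)%:E | th in A]).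
  by exists v.
apply: ereal_sup_le => _ [th Ath <-]; exists th => //; exact: AB.
Qed.

Lemma Xi_step (R : realType) (n q : nat) (lo hi theta : 'cV[R]_q)
   (st : seq (entry R n q)) (eps : R) :
  box lo hi theta ->
  consistent (box lo hi) st eps theta ->
  let S := consistent (box lo hi) st eps in
  box (\col_i inf [set th i 0 | th in S]) (\col_i sup [set th i 0 | th in S])
     `<=` box lo hi /\
  box (\col_i inf [set th i 0 | th in S]) (\col_i sup [set th i 0 | th in S]) theta.
Proof.
move=> bt ct S.
have H : forall i, lo i 0 <= inf [set th i 0 | th in S] /\
                   inf [set th i 0 | th in S] <= theta i 0 /\
                   theta i 0 <= sup [set th i 0 | th in S] /\
                   sup [set th i 0 | th in S] <= hi i 0.
  move=> i.
  have ne : [set th i 0 | th in S] !=set0 by exists (theta i 0), theta.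
  have lb : lbound [set th i 0 | th in S] (lo i 0).
    by move=> _ [th [bth _] <-]; have /andP[] := bth i.
  have ub : ubound [set th i 0 | th in S] (hi i 0).
    by move=> _ [th [bth _] <-]; have /andP[] := bth i.
  have inS : [set th i 0 | th in S] (theta i 0) by exists theta.
  split; first exact: lb_le_inf.
  split; first by apply: ge_inf => //; exists (lo i 0).
  split; first by apply: ub_le_sup => //; exists (hi i 0).
  exact: ge_sup.
split.
  move=> th bth i; have /andP[h1 h2] := bth i; rewrite !mxE in h1 h2.
  have [a1 [a2 [a3 a4]]] := H i.
  apply/andP; split; lra.
move=> i; rewrite !mxE; have [a1 [a2 [a3 a4]]] := H i.
by apply/andP; split.
Qed.
Theorem proposition2 (R : realType) (n p m : nat)
  (f : 'cV[R]_n -> 'cV[R]_n) (g : 'cV[R]_n -> 'M[R]_(n, m))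
  (F : 'cV[R]_n -> 'M[R]_(n, p)) (G : 'cV[R]_n -> 'M[R]_(n, m))
  (U : set 'cV[R]_m) (lo0 hi0 theta : 'cV[R]_(p + m))
  (x xd : R -> 'cV[R]_n) (u : R -> 'cV[R]_m)
  (dt eps : R) (tk : nat -> R) (M : R -> seq R)
  (V : 'cV[R]_n -> R) (gradV : 'cV[R]_n -> 'rV[R]_n)
  (D : set 'cV[R]_n) (gam : R -> R) :
  (* known dynamics *)
  loc_lipschitz f -> loc_lipschitz g ->
  (* unknown parameter lies in the known hyperrectangle Theta *)
  box lo0 hi0 theta ->
  (* x is a solution under the input signal u, xd its derivative *)
  (forall s : R, 0 <= s -> U (u s)) ->
  (forall s : R, 0 < s -> forall i : 'I_n, is_derive s 1 (fun r => x r i 0) (xd s i 0)) ->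
  (forall s : R, 0 <= s ->
     xd s = f (x s) + g (x s) *m u s + phi F G (x s) (u s) *m theta) ->
  (* the integrals of the identification scheme exist *)
  (forall t : R, dt <= t ->
     (forall i : 'I_n, wintegrable dt t (fun s => xd s i 0)) /\
     (forall i : 'I_n, wintegrable dt t (fun s => f (x s) i 0)) /\
     (forall i : 'I_n, wintegrable dt t (fun s => (g (x s) *m u s) i 0)) /\
     (forall (i : 'I_n) (j : 'I_(p + m)), wintegrable dt t (fun s => phi F G (x s) (u s) i j))) ->
  (* identification scheme *)
  0 < dt -> 0 < eps -> tk 0%N = 0 -> (forall k, tk k < tk k.+1) ->
  (forall t tau, tau \in M t -> dt <= tau <= t) ->
  (* Lyapunov function *)
  (forall y : 'cV[R]_n, differentiable V y /\
     forall h : 'cV[R]_n, 'd V y h = (gradV y *m h) 0 0) ->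
  continuous gradV ->
  (forall y : 'cV[R]_n, 0 <= V y) -> V 0 = 0 -> (forall y : 'cV[R]_n, y != 0 -> 0 < V y) ->
  classK gam ->
  (forall y : 'cV[R]_n, D y -> infsup gradV f g F G U (box lo0 hi0) y <= (- gam (V y))%:E)%E ->
  forall (k : nat) (y : 'cV[R]_n), D y ->
    (infsup gradV f g F G U
       (Xi lo0 hi0 tk
          (fun t => [seq record f g F G x xd u dt tau | tau <- M t]) eps k) y
     <= (- gam (V y))%:E)%E.
Proof.
move=> _ _ bth _ _ ode integ dt0 eps0 _ _ hM _ _ _ _ _ _ hyp k y Dy.
set stk := (fun t => [seq record f g F G x xd u dt tau | tau <- M t]).
have key : forall k, Xi lo0 hi0 tk stk eps k `<=` box lo0 hi0 /\
                     Xi lo0 hi0 tk stk eps k theta.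
  elim => [|k' [IHs IHt]]; first by split.
  rewrite /Xi /=.
  set b := Xi_bounds lo0 hi0 tk stk eps k'.
  have ct : consistent (box b.1 b.2) (stk (tk k'.+1)) eps theta.
    split; first exact: IHt.
    move=> e /mapP [tau tauM ->] i.
    have /andP [h1 h2] := hM _ _ tauM.
    rewrite (@record_zero _ _ _ _ _ _ _ _ _ _ _ _ _ tau ode (integ tau h1) h1 i).
    apply/andP; split; lra.
  have [s1 s2] := @Xi_step R n (p + m) b.1 b.2 theta (stk (tk k'.+1)) eps IHt ct.
  split => //.
  by move=> th /s1 /IHs.
apply: le_trans (hyp y Dy).
apply: infsup_mono.
by have [] := key k.
Qed.
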